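(* Let $n\ge 1$, let $\mathcal{P}=\{x\in\mathbb{R}^n : \tfrac12(\max_i x_i-\min_i x_i)\le 1\}$, and let $V=\{-1,0,1\}^n\setminus(\{-1,0\}^n\cup\{0,1\}^n)$ be the set of vectors with entries in $\{-1,0,1\}$ having at least one entry equal to $1$ and at least one entry equal to $-1$. Then each proper open face of $\mathcal{P}$ contains exactly one element of $V$. Moreover, for any $x\in\partial\mathcal{P}=\mathcal{P}\setminus\operatorname{int}(\mathcal{P})$, the element of $V$ lying in the same open face as $x$ is $v=\operatorname{round}\big(x+(1-\max_i x_i)\mathbf{1}\big)$, where $\mathbf{1}=(1,\dots,1)^\top$ and $\operatorname{round}(\cdot)$ replaces by $0$ every component that is not equal to $1$ or $-1$.
   Context: A polyhedron is a finite intersection of closed halfspaces. A face of a polyhedron $\mathcal{Q}\subseteq\mathbb{R}^n$ is a non-empty subset $F$ with either $F=\mathcal{Q}$ or $F=\mathcal{Q}\cap\{x: b^\top x=c\}$ for some $b\in\mathbb{R}^n$, $c\in\mathbb{R}$ with $b^\top x\le c$ for all $x\in\mathcal{Q}$. A proper face is a face different from $\mathcal{Q}$. An open face is the relative interior of a face (a face consisting of a single point is its own open face); a proper open face is the relative interior of a proper face. *)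

(* Defs.v *)
From HB Require Import structures.
From mathcomp Require Import all_boot all_order all_algebra.
From mathcomp Require Import reals.
Set Implicit Arguments. Unset Strict Implicit. Unset Printing Implicit Defensive.
Import Order.TTheory GRing.Theory Num.Theory.
Local Open Scope ring_scope.

Section Defs.
Variables (R : realType) (n : nat).
Notation vec := 'rV[R]_n.

Definition vset := vec -> Prop.

(* max_i x_i and min_i x_i (n >= 1 is assumed where used; the seed of the
   fold is the first coordinate, so it is one of the coordinates) *)
Definition coords (x : vec) : seq R := [seq x 0 i | i <- enum 'I_n].
Definition maxc (x : vec) : R := \big[Num.max/head 0 (coords x)]_(r <- coords x) r.
Definition minc (x : vec) : R := \big[Num.min/head 0 (coords x)]_(r <- coords x) r.

Definition dotv (b x : vec) : R := \sum_i b 0 i * x 0 i.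

(* distance used to define the (Euclidean) topology of R^n: the max-norm,
   which induces the same topology *)
Definition distv (x y : vec) : R := \big[Num.max/0]_i `|x 0 i - y 0 i|.

Definition is_face (Q F : vset) : Prop :=
  (exists x, F x) /\
  (F = Q \/ exists (b : vec) (c : R),
      (forall x, Q x -> dotv b x <= c) /\
      F = (fun x => Q x /\ dotv b x = c)).

Definition is_proper_face (Q F : vset) : Prop := is_face Q F /\ F <> Q.

Definition aff_hull (F : vset) : vset := fun y =>
  exists (k : nat) (p : 'I_k -> vec) (l : 'I_k -> R),
    (forall i, F (p i)) /\ \sum_i l i = 1 /\ y = \sum_i l i *: p i.

Definition relint (F : vset) : vset := fun x =>
  F x /\ exists e : R, 0 < e /\
    forall y, aff_hull F y -> distv y x < e -> F y.

Definition interior (Q : vset) : vset := fun x =>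
  exists e : R, 0 < e /\ forall y, distv y x < e -> Q y.

Definition boundary (Q : vset) : vset := fun x => Q x /\ ~ interior Q x.

Definition Ppoly : vset := fun x => (maxc x - minc x) / 2 <= 1.

Definition Vset : vset := fun v =>
  (forall i, v 0 i = -1 \/ v 0 i = 0 \/ v 0 i = 1) /\
  ~ ((forall i, v 0 i = -1 \/ v 0 i = 0) \/ (forall i, v 0 i = 0 \/ v 0 i = 1)).

Definition round (x : vec) : vec :=
  \row_i (if (x 0 i == 1) || (x 0 i == -1) then x 0 i else 0).

Definition ones : vec := const_mx 1.

End Defs.

(* Main.v *)
Require Import Defs.
From HB Require Import structures.
From mathcomp Require Import all_boot all_order all_algebra.
From mathcomp Require Import reals ring lra.
From Stdlib Require Import FunctionalExtensionality PropExtensionality Classical.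
Import Order.TTheory GRing.Theory Num.Theory.
Local Open Scope ring_scope.


Set Implicit Arguments.
Unset Strict Implicit.
Section H.
Variables (R : realType) (n : nat).
Notation vec := 'rV[R]_n.

Lemma bigmax_seq_ub (h : R) (s : seq R) : forall r, r \in h :: s ->
  r <= \big[Num.max/h]_(r0 <- s) r0.
Proof.
elim: s => [|a s IH] r.
  by rewrite big_nil inE => /eqP->.
rewrite big_cons in_cons => /orP[/eqP->|].
  by rewrite le_max; apply/orP; right; apply: IH; rewrite inE eqxx.
rewrite in_cons => /orP[/eqP->|Hr]; rewrite le_max; apply/orP; first by left.
by right; apply: IH; rewrite in_cons Hr orbT.
Qed.

Lemma bigmax_seq_mem (h : R) (s : seq R) :
  \big[Num.max/h]_(r0 <- s) r0 \in h :: s.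
Proof.
elim: s => [|a s IH]; first by rewrite big_nil inE eqxx.
rewrite big_cons maxEle; case: ifP => _.
  by move: IH; rewrite !inE => /orP[->|->]; rewrite ?orbT.
by rewrite !inE eqxx orbT.
Qed.

Lemma bigmin_seq_lb (h : R) (s : seq R) : forall r, r \in h :: s ->
  \big[Num.min/h]_(r0 <- s) r0 <= r.
Proof.
elim: s => [|a s IH] r.
  by rewrite big_nil inE => /eqP->.
rewrite big_cons in_cons => /orP[/eqP->|].
  by rewrite ge_min; apply/orP; right; apply: IH; rewrite inE eqxx.
rewrite in_cons => /orP[/eqP->|Hr]; rewrite ge_min; apply/orP; first by left.
by right; apply: IH; rewrite in_cons Hr orbT.
Qed.

Lemma bigmin_seq_mem (h : R) (s : seq R) :
  \big[Num.min/h]_(r0 <- s) r0 \in h :: s.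
Proof.
elim: s => [|a s IH]; first by rewrite big_nil inE eqxx.
rewrite big_cons minEle; case: ifP => _.
  by rewrite !inE eqxx orbT.
by move: IH; rewrite !inE => /orP[->|->]; rewrite ?orbT.
Qed.

Lemma coords_mem (x : vec) i : x 0 i \in coords x.
Proof. by apply/mapP; exists i; rewrite ?mem_enum. Qed.

Lemma head_coords (x : vec) : (0 < n)%N -> head 0 (coords x) \in coords x.
Proof.
move=> hn; rewrite /coords; case E: (enum 'I_n) => [|a s] /=.
  by move: (coords_mem x (Ordinal hn)); rewrite /coords E.
by rewrite inE eqxx.
Qed.

Lemma maxc_ub (x : vec) i : x 0 i <= maxc x.
Proof. by apply: bigmax_seq_ub; rewrite inE coords_mem orbT. Qed.
Lemma minc_lb (x : vec) i : minc x <= x 0 i.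
Proof. by apply: bigmin_seq_lb; rewrite inE coords_mem orbT. Qed.

Lemma maxc_ex (x : vec) : (0 < n)%N -> exists i, maxc x = x 0 i.
Proof.
move=> hn; have: maxc x \in coords x.
  move: (bigmax_seq_mem (head 0 (coords x)) (coords x)).
  rewrite inE => /orP[/eqP E|//]; rewrite /maxc E; exact: head_coords.
by move/mapP => [i _ ->]; exists i.
Qed.
Lemma minc_ex (x : vec) : (0 < n)%N -> exists i, minc x = x 0 i.
Proof.
move=> hn; have: minc x \in coords x.
  move: (bigmin_seq_mem (head 0 (coords x)) (coords x)).
  rewrite inE => /orP[/eqP E|//]; rewrite /minc E; exact: head_coords.
by move/mapP => [i _ ->]; exists i.
Qed.

Lemma PpolyP (x : vec) : (0 < n)%N ->
  Ppoly x <-> forall p q, x 0 p - x 0 q <= 2.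
Proof.
move=> hn; rewrite /Ppoly; split.
  move=> H p q; have := maxc_ub x p; have := minc_lb x q; lra.
move=> H; have [i ->] := maxc_ex x hn; have [j ->] := minc_ex x hn.
have := H i j; lra.
Qed.

Lemma distv_lt (x y : vec) e i : distv x y < e -> `|x 0 i - y 0 i| < e.
Proof.
apply: le_lt_trans; rewrite /distv (bigD1 i) //= le_max lexx //.
Qed.

Lemma distv_le (x y : vec) B : 0 <= B -> (forall i, `|x 0 i - y 0 i| <= B) ->
  distv x y <= B.
Proof.
move=> HB H; rewrite /distv; elim/big_ind: _ => //.
by move=> a b Ha Hb; rewrite ge_max Ha Hb.
Qed.

Lemma distv_ge0 (x y : vec) : 0 <= distv x y.
Proof.
rewrite /distv; elim/big_ind: _ => //.
by move=> a b Ha Hb; rewrite le_max Ha.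
Qed.

Lemma distv_ub (x y : vec) i : `|x 0 i - y 0 i| <= distv x y.
Proof. by rewrite /distv (bigD1 i) //= le_max lexx. Qed.

Definition tight (x : vec) p q := x 0 p - x 0 q = 2.
Definition G (x : vec) : vset R n :=
  fun y => Ppoly y /\ forall p q, tight x p q -> tight y p q.

Lemma small_t (e D : R) : 0 < e -> 0 <= D -> exists t, 0 < t /\ t * D < e.
Proof.
move=> he hD; exists (e / (2 * (D + 1))); split.
  by apply: divr_gt0 => //; apply: mulr_gt0 => //; lra.
have hD1 : 0 < 2 * (D + 1) by lra.
rewrite mulrAC ltr_pdivrMr //; nra.
Qed.

Lemma L_near (hn : (0 < n)%N) (z : vec) : Ppoly z -> exists e : R, 0 < e /\
  forall y, distv y z < e -> (forall p q, tight z p q -> tight y p q) -> Ppoly y.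
Proof.
move=> /(PpolyP z hn) Pz.
pose g (pq : 'I_n * 'I_n) := if z 0 pq.1 - z 0 pq.2 == 2 then 1
   else 2 - (z 0 pq.1 - z 0 pq.2).
pose gm := \big[Num.min/1]_pq g pq.
have gpos : 0 < gm.
  rewrite /gm; elim/big_ind: _ => //.
    by move=> a b ha hb; rewrite lt_min ha hb.
  move=> [p q] _; rewrite /g /=; case: eqP => // hne.
  have := Pz p q; rewrite le_eqVlt => /orP[/eqP //|]; lra.
exists (gm / 2); split; first by apply: divr_gt0.
move=> y hy ht; apply/(PpolyP y hn) => p q.
case: (boolP (z 0 p - z 0 q == 2)) => [/eqP e2|ne2].
  by rewrite (ht p q e2) lexx.
have hg : gm <= 2 - (z 0 p - z 0 q).
  rewrite /gm (bigD1 (p, q)) //= ge_min; apply/orP; left; rewrite /g /=.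
  by rewrite (negbTE ne2).
have := @distv_lt y z _ p hy; have := @distv_lt y z _ q hy; rewrite !ltr_norml.
move=> /andP[h1 h2] /andP[h3 h4]; lra.
Qed.

Lemma aff_tight (z y : vec) p q : aff_hull (G z) y -> tight z p q -> tight y p q.
Proof.
move=> [k [P [l [HP [Hl ->]]]]] ht; rewrite /tight !summxE -sumrB.
under eq_bigr => i _ do rewrite !mxE -mulrBr ((HP i).2 p q ht).
by rewrite -mulr_suml Hl mul1r.
Qed.

Lemma L_relint (hn : (0 < n)%N) (z : vec) : Ppoly z -> relint (G z) z.
Proof.
move=> Pz; split; first by split.
have [e [he H]] := L_near hn Pz; exists e; split => // y hy hd; split.
  by apply: H => // p q; apply: aff_tight.
by move=> p q; apply: aff_tight.
Qed.

Lemma sum_delta (y : vec) p :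
  \sum_k ((p == k)%:R * y 0 k) = y 0 p.
Proof.
rewrite (bigD1 p) //= eqxx mul1r big1 ?addr0 // => k hk.
by rewrite eq_sym (negbTE hk) mul0r.
Qed.

Lemma L_face (hn : (0 < n)%N) (z : vec) : Ppoly z -> is_face (@Ppoly R n) (G z).
Proof.
move=> Pz; split; first by exists z; split.
right.
pose b : vec := \row_k (\sum_(pq | z 0 pq.1 - z 0 pq.2 == 2)
   ((pq.1 == k)%:R - (pq.2 == k)%:R)).
have Hb : forall y, dotv b y = \sum_(pq | z 0 pq.1 - z 0 pq.2 == 2)
   (y 0 pq.1 - y 0 pq.2).
  move=> y; rewrite /dotv.
  under eq_bigr => k _ do rewrite mxE mulr_suml.
  rewrite exchange_big /=; apply: eq_bigr => pq _.
  under eq_bigr => k _ do rewrite mulrBl.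
  by rewrite sumrB !sum_delta.
exists b, (\sum_(pq | z 0 pq.1 - z 0 pq.2 == 2) 2); split.
  move=> y /(PpolyP y hn) Py; rewrite Hb; apply: ler_sum => pq _; exact: Py.
apply: functional_extensionality => y; apply: propositional_extensionality.
rewrite Hb; split.
  move=> [Py Ht]; split => //; apply: eq_bigr => pq /eqP h; exact: Ht.
move=> [Py Hs]; split => // p q hpq.
have Py' := (PpolyP y hn).1 Py.
have H0 : \sum_(pq | z 0 pq.1 - z 0 pq.2 == 2) (2 - (y 0 pq.1 - y 0 pq.2)) = 0.
  by rewrite sumrB Hs subrr.
have hpos : forall pq : 'I_n * 'I_n, z 0 pq.1 - z 0 pq.2 == 2 ->
    0 <= 2 - (y 0 pq.1 - y 0 pq.2).
  by move=> pq _; rewrite subr_ge0; apply: Py'.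
have h := psumr_eq0P hpos H0 (i := (p, q)).
rewrite /= in h; have {}h := h (introT eqP hpq).
rewrite /tight; lra.
Qed.

Definition comb (t : R) (x y : vec) : vec := (1 + t) *: x - t *: y.

Lemma combE t x y i : comb t x y 0 i = (1 + t) * x 0 i - t * y 0 i.
Proof. by rewrite /comb !mxE. Qed.

Lemma dotv_comb b t x y : dotv b (comb t x y) = (1 + t) * dotv b x - t * dotv b y.
Proof.
rewrite /dotv !mulr_sumr -sumrB; apply: eq_bigr => i _; rewrite combE; ring.
Qed.

Lemma aff_comb (F : vset R n) t x y : F x -> F y -> aff_hull F (comb t x y).
Proof.
move=> Fx Fy; exists 2%N, (fun i : 'I_2 => if i == ord0 then x else y),
  (fun i : 'I_2 => if i == ord0 then 1 + t else - t); split.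
  by move=> i; case: ifP.
rewrite !big_ord_recl !big_ord0 /=; split; first by ring.
by rewrite /comb addr0 scaleNr.
Qed.

Lemma distv_comb t x y : 0 <= t -> distv (comb t x y) x <= t * distv x y.
Proof.
move=> ht; apply: distv_le; first by apply: mulr_ge0 => //; apply: distv_ge0.
move=> i; rewrite combE.
have -> : (1 + t) * x 0 i - t * y 0 i - x 0 i = t * (x 0 i - y 0 i) by ring.
rewrite normrM ger0_norm //; apply: ler_wpM2l => //; exact: distv_ub.
Qed.

Lemma tight_comb t x y p q : tight x p q -> tight y p q -> tight (comb t x y) p q.
Proof. rewrite /tight !combE => h1 h2. rewrite -[RHS]h1; nra. Qed.

Lemma L_Gsub (hn : (0 < n)%N) b c (x y : vec) :
  (forall y, Ppoly y -> dotv b y <= c) -> Ppoly x -> dotv b x = c ->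
  G x y -> dotv b y = c.
Proof.
move=> Hbc Px bx [Py Ty].
have [e [he He]] := L_near hn Px.
have [t [ht htD]] := @small_t e (distv x y) he (distv_ge0 x y).
have Pz : Ppoly (comb t x y).
  apply: He; first by apply: le_lt_trans (@distv_comb t _ _ (ltW ht)) htD.
  by move=> p q h; apply: tight_comb => //; apply: Ty.
have := Hbc _ Pz; rewrite dotv_comb bx => h1.
have := Hbc _ Py => h2; nra.
Qed.

Lemma face_sub (F : vset R n) y : is_face (@Ppoly R n) F -> F y -> Ppoly y.
Proof. by move=> [_ [->|[b [c [_ ->]]]]] // []. Qed.

Lemma L_eq (hn : (0 < n)%N) (F : vset R n) x :
  is_face (@Ppoly R n) F -> relint F x -> F = G x.
Proof.
move=> HF [Fx [e [he He]]].
have Px := @face_sub F _ HF Fx.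
apply: functional_extensionality => y; apply: propositional_extensionality.
split.
  move=> Fy; split; first exact: @face_sub F _ HF Fy.
  have [t [ht htD]] := @small_t e (distv x y) he (distv_ge0 x y).
  have Fz : F (comb t x y).
    apply: He; first exact: aff_comb.
    by apply: le_lt_trans (@distv_comb t _ _ (ltW ht)) htD.
  move=> p q hpq.
  have := (PpolyP _ hn).1 (@face_sub F _ HF Fz) p q; rewrite !combE.
  have := (PpolyP _ hn).1 (@face_sub F _ HF Fy) p q; move: hpq; rewrite /tight => h.
  nra.
move=> Gy; case: HF => _ [FP|[b [c [Hbc FE]]]]; first by rewrite FP; case: Gy.
rewrite FE in Fx *; case: Fx => _ bx; split; first by case: Gy.
exact: (L_Gsub hn Hbc Px bx Gy).
Qed.

Definition vround (z : vec) : vec := round (z + (1 - maxc z) *: ones R n).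

Lemma L_vE (hn : (0 < n)%N) (z : vec) p0 q0 : Ppoly z -> tight z p0 q0 ->
  forall i, let M := maxc z in
  (vround z 0 i = 1 /\ z 0 i = M) \/ (vround z 0 i = -1 /\ z 0 i = M - 2) \/
  (vround z 0 i = 0 /\ M - 2 < z 0 i /\ z 0 i < M).
Proof.
move=> /(PpolyP _ hn) Pz hz i; rewrite /=.
have hM : forall j, z 0 j <= (maxc z) by move=> j; exact: maxc_ub.
have [k hk] := maxc_ex z hn.
have hlo : forall j, (maxc z) - 2 <= z 0 j.
  move=> j; have := Pz p0 j; have := Pz k q0; have := hM p0; move: hz.
  rewrite /tight hk; lra.
rewrite /vround /round !mxE.
case: (eqVneq (z 0 i + (1 - maxc z) * 1) 1) => [e1|n1] /=.
  by left; split => //; lra.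
case: (eqVneq (z 0 i + (1 - maxc z) * 1) (-1)) => [e1|n2] /=.
  by right; left; split => //; lra.
right; right; split => //.
have := hM i; have := hlo i; rewrite !le_eqVlt.
move=> /orP[/eqP h1|h1] /orP[/eqP h2|h2].
- have e : z 0 i + (1 - maxc z) * 1 = -1 by lra.
  by rewrite e eqxx in n2.
- have e : z 0 i + (1 - maxc z) * 1 = -1 by lra.
  by rewrite e eqxx in n2.
- have e : z 0 i + (1 - maxc z) * 1 = 1 by lra.
  by rewrite e eqxx in n1.
- by split.
Qed.

Lemma L_round (hn : (0 < n)%N) (z : vec) p0 q0 : Ppoly z -> tight z p0 q0 ->
  Vset (vround z) /\ Ppoly (vround z) /\
  (forall p q, tight (vround z) p q <-> tight z p q).
Proof.
move=> Pz hz; have vE := L_vE hn Pz hz.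
have Pz' := (PpolyP _ hn).1 Pz.
have hM : forall j, z 0 j <= maxc z by move=> j; exact: maxc_ub.
have [k hk] := maxc_ex z hn.
have hp0 : z 0 p0 = maxc z.
  have := Pz' k q0; have := hM p0; move: hz; rewrite /tight hk; lra.
have hq0 : z 0 q0 = maxc z - 2 by move: hz; rewrite /tight hp0; lra.
split; [split|split].
- by move=> i; case: (vE i) => [[-> _]|[[-> _]|[-> _]]]; auto.
- case=> H.
    have := H p0; case: (vE p0) => [[-> _]|[[_ h]|[_ h]]]; lra.
  have := H q0; case: (vE q0) => [[_ h]|[[-> _]|[_ h]]]; lra.
- apply/(PpolyP _ hn) => p q.
  by case: (vE p) => [[-> _]|[[-> _]|[-> _]]];
     case: (vE q) => [[-> _]|[[-> _]|[-> _]]]; lra.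
- move=> p q; rewrite /tight.
  have := hM p; have := hM q.
  by case: (vE p) => [[-> h1]|[[-> h1]|[-> h1]]];
     case: (vE q) => [[-> h2]|[[-> h2]|[-> h2]]]; split; lra.
Qed.

Lemma tight_entries (v : vec) p q :
  (forall i, v 0 i = -1 \/ v 0 i = 0 \/ v 0 i = 1) ->
  tight v p q <-> v 0 p = 1 /\ v 0 q = -1.
Proof.
move=> H; rewrite /tight.
by case: (H p) => [->|[->|->]]; case: (H q) => [->|[->|->]]; split;
  try (move=> [? ?]; lra); try lra.
Qed.

Lemma V_ex (v : vec) : Vset v ->
  (exists i, v 0 i = 1) /\ (exists j, v 0 j = -1).
Proof.
move=> [H Hn]; split; apply: NNPP => Hne; apply: Hn.
  left => i; case: (H i) => [|[|h]]; auto; exfalso; apply: Hne; by exists i.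
right => i; case: (H i) => [h|[|]]; auto; exfalso; apply: Hne; by exists i.
Qed.

Lemma L_Vuniq (v v' : vec) : Vset v -> Vset v' ->
  (forall p q, tight v p q <-> tight v' p q) -> v = v'.
Proof.
move=> Vv Vv' Ht.
have [[i1 hi1] [j1 hj1]] := V_ex Vv.
have [[i2 hi2] [j2 hj2]] := V_ex Vv'.
have T1 := fun p q => @tight_entries v p q Vv.1.
have T2 := fun p q => @tight_entries v' p q Vv'.1.
apply/rowP => i.
case: (Vv.1 i) => [h|[h|h]].
- have : tight v' i1 i by apply/Ht; apply/T1; split.
  by move/T2 => [_ ->].
- case: (Vv'.1 i) => [h'|[h'|h']].
  + have : tight v i2 i by apply/Ht; apply/T2; split.
    by move/T1 => [_ h2]; move: h; rewrite h2 => h; exfalso; lra.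
  + by rewrite h h'.
  + have : tight v i j2 by apply/Ht; apply/T2; split.
    by move/T1 => [h2 _]; move: h; rewrite h2 => h; exfalso; lra.
- have : tight v' i j1 by apply/Ht; apply/T1; split.
  by move/T2 => [-> _].
Qed.

Definition Tset (y : vec) : {set 'I_n * 'I_n} :=
  [set pq | y 0 pq.1 - y 0 pq.2 == 2].

Lemma L_step (hn : (0 < n)%N) b c (y : vec) :
  Ppoly y -> dotv b y = c ->
  ~ (forall w, Ppoly w -> dotv b w = c -> G y w) ->
  exists m, Ppoly m /\ dotv b m = c /\ (#|Tset m| < #|Tset y|)%N.
Proof.
move=> Py by_ Hn.
have [w [Pw [bw nG]]] : exists w, Ppoly w /\ dotv b w = c /\ ~ G y w.
  apply: NNPP => H; apply: Hn => w Pw bw; apply: NNPP => nG; apply: H.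
  by exists w.
have [p [q [tp ntq]]] : exists p q, tight y p q /\ ~ tight w p q.
  apply: NNPP => H; apply: nG; split => // p q tp; apply: NNPP => ntq.
  by apply: H; exists p, q.
have Py' := (PpolyP _ hn).1 Py; have Pw' := (PpolyP _ hn).1 Pw.
exists (comb (- (1/2)) y w); split; [|split].
- apply/(PpolyP _ hn) => p' q'; rewrite !combE.
  have := Py' p' q'; have := Pw' p' q'; lra.
- rewrite dotv_comb by_ bw; ring.
- apply: proper_card; apply/properP; split.
    apply/subsetP => pq; rewrite !inE !combE => /eqP h.
    apply/eqP; have := Py' pq.1 pq.2; have := Pw' pq.1 pq.2; lra.
  exists (p, q); first by rewrite inE; apply/eqP.
  rewrite inE !combE; apply/negP => /eqP h; apply: ntq; rewrite /tight.
  have := Py' p q; have := Pw' p q; lra.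
Qed.

Lemma L_min (hn : (0 < n)%N) b c (y : vec) :
  Ppoly y -> dotv b y = c ->
  exists z, Ppoly z /\ dotv b z = c /\
    (forall w, Ppoly w -> dotv b w = c -> G z w).
Proof.
suff: forall k y, (#|Tset y| <= k)%N -> Ppoly y -> dotv b y = c ->
  exists z, Ppoly z /\ dotv b z = c /\
    (forall w, Ppoly w -> dotv b w = c -> G z w) by apply.
elim=> [|k IH] y0 hk Py by_;
  (case: (classic (forall w, Ppoly w -> dotv b w = c -> G y0 w)) => H;
    [by exists y0|]);
  have [m [Pm [bm hm]]] := L_step hn Py by_ H.
  by move: hk; rewrite leqn0 => /eqP e; rewrite e in hm.
by apply: (IH m) => //; rewrite -ltnS; apply: leq_trans hm hk.
Qed.
End H.
Unset Implicit Arguments.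
Set Strict Implicit.

Lemma G_ext (R : realType) (n : nat) (x y : 'rV[R]_n) :
  (forall p q, tight x p q <-> tight y p q) -> G x = G y.
Proof.
move=> H; apply: functional_extensionality => w; apply: propositional_extensionality.
split=> [[Pw Hw]|[Pw Hw]]; split => // p q h; apply: Hw; exact/H.
Qed.

Theorem lemma3 (R : realType) (n : nat) (hn : (1 <= n)%N) :
  (* each proper open face of P contains exactly one element of V *)
  (forall F : vset R n, is_proper_face (@Ppoly R n) F ->
     exists! v : 'rV[R]_n, Vset v /\ relint F v) /\
  (* for x on the boundary, the element of V in the open face of x *)
  (forall x : 'rV[R]_n, boundary (@Ppoly R n) x ->
     (exists F : vset R n, is_proper_face (@Ppoly R n) F /\ relint F x) /\
     (forall F : vset R n, is_proper_face (@Ppoly R n) F -> relint F x ->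
        let v := round (x + (1 - maxc x) *: ones R n) in
        Vset v /\ relint F v)).
Proof.
split.
  move=> F [HF FneP].
  have HF' := HF.
  case: HF' => [[y Fy] [FP|[b [c [Hbc FE]]]]]; first by [].
  rewrite FE in Fy; case: Fy => Py by_.
  have [z [Pz [bz Hz]]] := L_min hn Py by_.
  have FG : F = G z.
    rewrite FE; apply: functional_extensionality => w.
    apply: propositional_extensionality; split.
      by move=> [Pw bw]; apply: Hz.
    move=> Gw; split; first by case: Gw.
    exact: (L_Gsub hn Hbc Pz bz Gw).
  have [p0 [q0 tz]] : exists p q, tight z p q.
    apply: NNPP => H; apply: FneP; rewrite FG.
    apply: functional_extensionality => w; apply: propositional_extensionality.
    split; first by case.
    move=> Pw; split => // p q tp; exfalso; apply: H; by exists p, q.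
  have [Vv [Pv Tv]] := L_round hn Pz tz.
  have GvGz : G (vround z) = G z by apply: G_ext.
  exists (vround z); split.
    by split => //; rewrite FG -GvGz; apply: L_relint.
  move=> v' [Vv' rv'].
  have FG' := L_eq hn HF rv'.
  have Fv' : G v' v' by rewrite -FG'; exact: rv'.1.
  have Fv : G (vround z) (vround z) by split.
  apply: L_Vuniq => // p q; split => h.
    by have := Fv' ; rewrite -FG' FG -GvGz => -[_]; apply.
  by have := Fv; rewrite GvGz -FG FG' => -[_]; apply.
move=> x [Px nint].
have [p0 [q0 tx]] : exists p q, tight x p q.
  apply: NNPP => H; apply: nint.
  have [e [he He]] := L_near hn Px; exists e; split => // y hy.
  apply: He => // p q tp; exfalso; apply: H; by exists p, q.
have [Vv [Pv Tv]] := L_round hn Px tx.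
split.
  exists (G x); split; last exact: L_relint.
  split; first exact: L_face.
  move=> E.
  have P0 : Ppoly (0 : 'rV[R]_n).
    by apply/(PpolyP _ hn) => p q; rewrite !mxE subrr ler0n.
  rewrite -E in P0; case: P0 => _ /(_ p0 q0 tx).
  by rewrite /tight !mxE subrr => /eqP; rewrite eq_sym pnatr_eq0.
move=> F [HF _] rF v.
have FG := L_eq hn HF rF.
split; first exact: Vv.
have GvGx : G (vround x) = G x by apply: G_ext.
by rewrite FG -GvGx; apply: L_relint.
Qed.
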